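(* Let $g\in G=\mathrm{PSL}(2,\mathbb{C})^q\times\mathrm{PSL}(2,\mathbb{R})^r$ be elliptic of infinite order and $h\in G$ loxodromic. Then there are positive integers $m,n$ such that $g^mh^n$ and $h^ng^m$ are loxodromic.
   Context: An element $g=(g_1,\dots,g_{q+r})\in G$ is elliptic (resp. loxodromic) if every component $g_i$ is an elliptic (resp. loxodromic) element of $\mathrm{PSL}(2,\mathbb{C})$. *)

(* Defs.v *)
From Stdlib Require Import Reals.
Open Scope R_scope.

Record C := mkC { Re : R ; Im : R }.
Definition C0 : C := mkC 0 0.
Definition C1 : C := mkC 1 0.
Definition Cadd (z w : C) : C := mkC (Re z + Re w) (Im z + Im w).
Definition Copp (z : C) : C := mkC (- Re z) (- Im z).
Definition Cmul (z w : C) : C :=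
  mkC (Re z * Re w - Im z * Im w) (Re z * Im w + Im z * Re w).

Record M2 := mkM2 { ma : C ; mb : C ; mc : C ; md : C }.
Definition Mid : M2 := mkM2 C1 C0 C0 C1.
Definition Mneg (A : M2) : M2 := mkM2 (Copp (ma A)) (Copp (mb A)) (Copp (mc A)) (Copp (md A)).
Definition Mmul (A B : M2) : M2 :=
  mkM2 (Cadd (Cmul (ma A) (ma B)) (Cmul (mb A) (mc B)))
       (Cadd (Cmul (ma A) (mb B)) (Cmul (mb A) (md B)))
       (Cadd (Cmul (mc A) (ma B)) (Cmul (md A) (mc B)))
       (Cadd (Cmul (mc A) (mb B)) (Cmul (md A) (md B))).
Fixpoint Mpow (A : M2) (n : nat) : M2 :=
  match n with O => Mid | S k => Mmul A (Mpow A k) end.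
Definition Mdet (A : M2) : C := Cadd (Cmul (ma A) (md A)) (Copp (Cmul (mb A) (mc A))).
Definition Mtr (A : M2) : C := Cadd (ma A) (md A).

Definition inSL2C (A : M2) : Prop := Mdet A = C1.
Definition inSL2R (A : M2) : Prop :=
  inSL2C A /\ Im (ma A) = 0 /\ Im (mb A) = 0 /\ Im (mc A) = 0 /\ Im (md A) = 0.

(** An element of PSL(2,C) is represented by a lift A in SL(2,C); A and -A
    represent the same element.  Ellipticity / loxodromicity depend only on
    the trace up to sign, hence are well defined on PSL(2,C). *)
Definition PSL_eq (A B : M2) : Prop := A = B \/ A = Mneg B.
Definition PSL_is_id (A : M2) : Prop := PSL_eq A Mid.

Definition elliptic2 (A : M2) : Prop :=
  Im (Mtr A) = 0 /\ -2 < Re (Mtr A) < 2.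
Definition loxodromic2 (A : M2) : Prop :=
  ~ (Im (Mtr A) = 0 /\ -2 <= Re (Mtr A) <= 2).

(** G = PSL(2,C)^q x PSL(2,R)^r.  An element is a pair (gc, gr) of families of
    lifts; only indices i < q (resp. j < r) are meaningful. *)
Definition Gelt : Type := ((nat -> M2) * (nat -> M2))%type.

Definition inG (q r : nat) (g : Gelt) : Prop :=
  (forall i, (i < q)%nat -> inSL2C (fst g i)) /\
  (forall j, (j < r)%nat -> inSL2R (snd g j)).

Definition Gmul (g h : Gelt) : Gelt :=
  (fun i => Mmul (fst g i) (fst h i), fun j => Mmul (snd g j) (snd h j)).
Definition Gpow (g : Gelt) (n : nat) : Gelt :=
  (fun i => Mpow (fst g i) n, fun j => Mpow (snd g j) n).

Definition G_is_id (q r : nat) (g : Gelt) : Prop :=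
  (forall i, (i < q)%nat -> PSL_is_id (fst g i)) /\
  (forall j, (j < r)%nat -> PSL_is_id (snd g j)).

Definition infinite_order (q r : nat) (g : Gelt) : Prop :=
  forall k : nat, (0 < k)%nat -> ~ G_is_id q r (Gpow g k).

Definition elliptic (q r : nat) (g : Gelt) : Prop :=
  (forall i, (i < q)%nat -> elliptic2 (fst g i)) /\
  (forall j, (j < r)%nat -> elliptic2 (snd g j)).
Definition loxodromic (q r : nat) (g : Gelt) : Prop :=
  (forall i, (i < q)%nat -> loxodromic2 (fst g i)) /\
  (forall j, (j < r)%nat -> loxodromic2 (snd g j)).

(* Main.v *)
Require Import Defs.
From Stdlib Require Import Reals Lra Lia Psatz Classical.
Import Defs.
Open Scope R_scope.

Lemma Ceq (z w : C) : Re z = Re w -> Im z = Im w -> z = w.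
Proof. destruct z, w; simpl; intros; subst; reflexivity. Qed.

Ltac cring := apply Ceq; simpl; ring.

Definition Cn2 (z : C) := Re z * Re z + Im z * Im z.
Definition Cabs z := sqrt (Cn2 z).

Lemma Cn2_nonneg z : 0 <= Cn2 z. Proof. unfold Cn2; nra. Qed.
Lemma Cn2_mul z w : Cn2 (Cmul z w) = Cn2 z * Cn2 w. Proof. unfold Cn2; simpl; ring. Qed.
Lemma Cabs_nonneg z : 0 <= Cabs z. Proof. apply sqrt_pos. Qed.
Lemma Cabs_mul z w : Cabs (Cmul z w) = Cabs z * Cabs w.
Proof. unfold Cabs; rewrite Cn2_mul; apply sqrt_mult; apply Cn2_nonneg. Qed.
Lemma Cn2_zero z : Cn2 z = 0 -> z = C0.
Proof. unfold Cn2; intro H; apply Ceq; simpl; nra. Qed.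
Lemma Cn2_pos z : z <> C0 -> 0 < Cn2 z.
Proof. intro H. destruct (Rle_lt_or_eq_dec 0 (Cn2 z) (Cn2_nonneg z)) as [h|h];
  [exact h| exfalso; apply H, Cn2_zero; auto]. Qed.
Lemma Cabs_pos z : z <> C0 -> 0 < Cabs z.
Proof. intro H; apply sqrt_lt_R0, Cn2_pos, H. Qed.
Lemma Cmul_nz z w : z <> C0 -> w <> C0 -> Cmul z w <> C0.
Proof. intros Hz Hw E. pose proof (Cn2_pos _ Hz); pose proof (Cn2_pos _ Hw).
  assert (Cn2 (Cmul z w) = 0) by (rewrite E; unfold Cn2; simpl; ring).
  rewrite Cn2_mul in H1. nra. Qed.
Lemma Cmul_integral z w : Cmul z w = C0 -> w <> C0 -> z = C0.
Proof. intros E Hw. destruct (classic (z = C0)); auto. exfalso; apply (Cmul_nz z w); auto. Qed.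

Lemma sq_le u v : 0 <= v -> u*u <= v*v -> u <= v.
Proof. intros. destruct (Rle_or_lt u v); auto. nra. Qed.

Lemma Cabs_add z w : Cabs (Cadd z w) <= Cabs z + Cabs w.
Proof.
  unfold Cabs. rewrite <- (sqrt_square (sqrt (Cn2 z) + sqrt (Cn2 w)))
    by (pose proof (sqrt_pos (Cn2 z)); pose proof (sqrt_pos (Cn2 w)); lra).
  apply sqrt_le_1_alt.
  pose proof (sqrt_pos (Cn2 z)); pose proof (sqrt_pos (Cn2 w)).
  pose proof (sqrt_sqrt (Cn2 z) (Cn2_nonneg z)).
  pose proof (sqrt_sqrt (Cn2 w) (Cn2_nonneg w)).
  set (sz := sqrt (Cn2 z)) in *; set (sw := sqrt (Cn2 w)) in *.
  unfold Cn2 in *; simpl.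
  destruct z as [a b]; destruct w as [c d]; simpl in *.
  assert (CS : (a*c+b*d)*(a*c+b*d) <= (a*a+b*b)*(c*c+d*d)).
  { assert (0 <= (a*d-b*c)*(a*d-b*c)) by apply Rle_0_sqr.
    replace ((a*a+b*b)*(c*c+d*d)) with ((a*c+b*d)*(a*c+b*d) + (a*d-b*c)*(a*d-b*c)) by ring. lra. }
  assert (E : sz*sw*(sz*sw) = (a*a+b*b)*(c*c+d*d)).
  { replace (sz*sw*(sz*sw)) with ((sz*sz)*(sw*sw)) by ring. rewrite H1, H2; ring. }
  assert (a*c+b*d <= sz*sw) by (apply sq_le; [apply Rmult_le_pos; auto | lra]).
  clearbody sz sw. nra.
Qed.

Fixpoint Cpow (z : C) (n : nat) : C := match n with O => C1 | S k => Cmul z (Cpow z k) end.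
Lemma Cabs_C1 : Cabs C1 = 1. Proof. unfold Cabs, Cn2; simpl. replace (1*1+0*0) with 1 by ring. apply sqrt_1. Qed.
Lemma Cabs_pow z n : Cabs (Cpow z n) = Cabs z ^ n.
Proof. induction n; simpl. apply Cabs_C1. rewrite Cabs_mul, IHn; ring. Qed.
Lemma Cpow_nz z n : z <> C0 -> Cpow z n <> C0.
Proof. intro H; induction n; simpl. intro E; apply (f_equal Re) in E; simpl in E; lra.
  apply Cmul_nz; auto. Qed.

Lemma sq_eq u v : 0 <= u -> 0 <= v -> u*u = v*v -> u = v.
Proof. intros; nra. Qed.

Lemma Csqrt_ex w : exists s, Cmul s s = w.
Proof.
  destruct w as [a b].
  set (r := sqrt (a*a+b*b)).
  assert (Hr0 : 0 <= r) by apply sqrt_pos.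
  assert (Hrr : r*r = a*a+b*b) by (apply sqrt_sqrt; nra).
  assert (Ha1 : 0 <= (r+a)/2) by nra.
  assert (Ha2 : 0 <= (r-a)/2) by nra.
  set (x := sqrt ((r+a)/2)). set (y := sqrt ((r-a)/2)).
  assert (Hx : x*x = (r+a)/2) by (apply sqrt_sqrt; auto).
  assert (Hy : y*y = (r-a)/2) by (apply sqrt_sqrt; auto).
  assert (Hx0 : 0 <= x) by apply sqrt_pos.
  assert (Hy0 : 0 <= y) by apply sqrt_pos.
  assert (Hxy : (2*x*y)*(2*x*y) = b*b) by nra.
  destruct (Rle_or_lt 0 b) as [Hb|Hb].
  - exists (mkC x y). apply Ceq; simpl.
    + nra.
    + assert (2*x*y = b) by (apply sq_eq; nra). lra.
  - exists (mkC x (-y)). apply Ceq; simpl.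
    + nra.
    + assert (2*x*y = -b) by (apply sq_eq; nra). lra.
Qed.

Ltac mdes X := let a := fresh in let b := fresh in let c := fresh in let d := fresh in
  destruct X as [[a ?] [b ?] [c ?] [d ?]].

Lemma R2 X B P : Mtr (Mmul X (Mmul B (Mmul B P))) =
  Cadd (Cmul (Mtr B) (Mtr (Mmul X (Mmul B P)))) (Copp (Cmul (Mdet B) (Mtr (Mmul X P)))).
Proof. mdes X; mdes B; mdes P; cring. Qed.

Lemma R1 A P Y : Mtr (Mmul (Mmul A (Mmul A P)) Y) =
  Cadd (Cmul (Mtr A) (Mtr (Mmul (Mmul A P) Y))) (Copp (Cmul (Mdet A) (Mtr (Mmul P Y)))).
Proof. mdes A; mdes P; mdes Y; cring. Qed.

Lemma Mtr_comm X Y : Mtr (Mmul X Y) = Mtr (Mmul Y X).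
Proof. mdes X; mdes Y; cring. Qed.

Lemma eig (t : C) : ~ (Im t = 0 /\ -2 <= Re t <= 2) ->
  exists l u, Cadd l u = t /\ Cmul l u = C1 /\ 1 < Cn2 l.
Proof.
  intro Ht.
  destruct (Csqrt_ex (Cadd (Cmul t t) (mkC (-4) 0))) as [s Hs].
  assert (H1 := f_equal Re Hs). assert (H2 := f_equal Im Hs). simpl in H1, H2.
  set (l0 := Cmul (mkC (1/2) 0) (Cadd t s)).
  set (u0 := Cmul (mkC (1/2) 0) (Cadd t (Copp s))).
  assert (Hsum : Cadd l0 u0 = t) by (apply Ceq; unfold l0, u0; simpl; field).
  assert (Hprod : Cmul l0 u0 = C1).
  { apply Ceq; unfold l0, u0; simpl; nra. }
  assert (Hn : Cn2 l0 * Cn2 u0 = 1).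
  { rewrite <- Cn2_mul, Hprod. unfold Cn2; simpl; ring. }
  pose proof (Cn2_nonneg l0). pose proof (Cn2_nonneg u0).
  destruct (Rtotal_order (Cn2 l0) 1) as [Hlt|[Heq|Hgt]].
  - exists u0, l0. split; [rewrite <- Hsum; cring|]. split; [rewrite <- Hprod; cring|]. nra.
  - exfalso. apply Ht.
    clearbody l0 u0. destruct l0 as [a b], u0 as [c d].
    assert (P1 := f_equal Re Hprod). assert (P2 := f_equal Im Hprod).
    assert (S1 := f_equal Re Hsum). assert (S2 := f_equal Im Hsum).
    simpl in *. unfold Cn2 in Heq; simpl in Heq.
    assert (Ec : c = a).
    { transitivity (c*(a*a+b*b)); [rewrite Heq; ring|].
      transitivity (a*(a*c-b*d) + b*(a*d+b*c)); [ring|]. rewrite P1, P2; ring. }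
    assert (Ed : d = -b).
    { transitivity (d*(a*a+b*b)); [rewrite Heq; ring|].
      transitivity (a*(a*d+b*c) - b*(a*c-b*d)); [ring|]. rewrite P1, P2; ring. }
    subst c d. split; [lra|]. split; nra.
  - exists l0, u0. auto.
Qed.

Lemma lox_of_abs z : 2 < Cabs z -> ~ (Im z = 0 /\ -2 <= Re z <= 2).
Proof.
  intros H [H1 H2]. assert (Cn2 z <= 4) by (unfold Cn2; rewrite H1; nra).
  assert (Cabs z <= sqrt 4) by (apply sqrt_le_1_alt; auto).
  replace 4 with (2*2) in H3 by ring. rewrite sqrt_square in H3 by lra. lra.
Qed.

Lemma growth (X B : M2) (l u : C) : Mdet B = C1 -> Cadd l u = Mtr B -> Cmul l u = C1 -> 1 < Cn2 l ->
  Cadd (Mtr (Mmul X (Mmul B Mid))) (Copp (Cmul u (Mtr (Mmul X Mid)))) <> C0 ->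
  exists N, forall n, (N <= n)%nat -> loxodromic2 (Mmul X (Mpow B n)).
Proof.
  intros HB Hs Hp Hl HD.
  set (x := fun n => Mtr (Mmul X (Mpow B n))).
  assert (Hrec : forall n, x (S (S n)) = Cadd (Cmul (Cadd l u) (x (S n))) (Copp (x n))).
  { intro n. unfold x. change (Mpow B (S (S n))) with (Mmul B (Mmul B (Mpow B n))).
    change (Mpow B (S n)) with (Mmul B (Mpow B n)).
    rewrite R2, HB, Hs. cring. }
  set (U := fun n => Cadd (x (S n)) (Copp (Cmul u (x n)))).
  set (V := fun n => Cadd (x (S n)) (Copp (Cmul l (x n)))).
  assert (HU : forall n, U n = Cmul (Cpow l n) (U 0%nat)).
  { induction n. simpl; cring.
    transitivity (Cmul l (U n)).
    - unfold U. rewrite Hrec.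
      transitivity (Cadd (Cmul l (x (S n))) (Copp (Cmul (Cmul l u) (x n)))); [|cring].
      rewrite Hp. cring.
    - rewrite IHn. simpl. cring. }
  assert (HV : forall n, V n = Cmul (Cpow u n) (V 0%nat)).
  { induction n. simpl; cring.
    transitivity (Cmul u (V n)).
    - unfold V. rewrite Hrec.
      transitivity (Cadd (Cmul u (x (S n))) (Copp (Cmul (Cmul l u) (x n)))); [|cring].
      rewrite Hp. cring.
    - rewrite IHn. simpl. cring. }
  assert (Hx : forall n, Cmul (Cpow l n) (U 0%nat) =
     Cadd (Cmul (Cadd l (Copp u)) (x n)) (Cmul (Cpow u n) (V 0%nat))).
  { intro n. rewrite <- HU, <- HV. unfold U, V. cring. }
  assert (Hal : 1 < Cabs l).
  { unfold Cabs. rewrite <- sqrt_1. apply sqrt_lt_1_alt. lra. }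
  assert (Hlu : Cabs l * Cabs u = 1) by (rewrite <- Cabs_mul, Hp; apply Cabs_C1).
  pose proof (Cabs_nonneg u) as Hu0.
  assert (Hau : Cabs u < 1) by nra.
  assert (Hun : forall n, Cabs u ^ n <= 1).
  { intro n. rewrite <- (pow1 n). apply pow_incr. lra. }
  assert (Hne : Cadd l (Copp u) <> C0).
  { intro E. assert (l = u).
    { apply Ceq; [apply (f_equal Re) in E|apply (f_equal Im) in E]; simpl in E; lra. }
    subst u.
    assert (Cn2 (Cmul l l) = 1) by (rewrite Hp; unfold Cn2; simpl; ring).
    rewrite Cn2_mul in H. nra. }
  pose proof (Cabs_pos _ Hne) as Hd. pose proof (Cabs_pos _ HD) as HDp.
  set (D := Cabs (U 0%nat)) in *. set (E := Cabs (V 0%nat)).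
  set (K := Cabs (Cadd l (Copp u))) in *.
  destruct (Pow_x_infinity (Cabs l) ltac:(rewrite Rabs_pos_eq; lra) ((2*K + E + 1)/D)) as [N HN].
  exists N. intros n Hn. unfold loxodromic2. apply lox_of_abs.
  specialize (HN n Hn). rewrite Rabs_pos_eq in HN by (apply pow_le; lra).
  assert (Hb : Cabs l ^ n * D >= 2*K + E + 1).
  { apply Rle_ge. apply Rge_le in HN. apply (Rmult_le_compat_r D) in HN; [|left; exact HDp].
    unfold Rdiv in HN. rewrite Rmult_assoc, Rinv_l in HN by (apply Rgt_not_eq; exact HDp). lra. }
  assert (Htri := Cabs_add (Cmul (Cadd l (Copp u)) (x n)) (Cmul (Cpow u n) (V 0%nat))).
  rewrite <- Hx, !Cabs_mul, !Cabs_pow in Htri.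
  fold D E K in Htri. specialize (Hun n).
  pose proof (Cabs_nonneg (V 0%nat)). fold E in H.
  assert (Cabs u ^ n * E <= E) by nra.
  assert (K * Cabs (x n) > 2 * K) by lra.
  unfold x in H1. nra.
Qed.

Fixpoint cseq (T : C) (k : nat) : C :=
  match k with O => C0 | S k' => match k' with O => C1
  | S k'' => Cadd (Cmul T (cseq T k')) (Copp (cseq T k'')) end end.

Definition Rec (T : C) (d : nat -> C) :=
  forall m, d (S (S m)) = Cadd (Cmul T (d (S m))) (Copp (d m)).

Lemma cseq_rec T : Rec T (cseq T). Proof. intro m. reflexivity. Qed.

Lemma lin T d : Rec T d -> forall m k,
  d (m + S k)%nat = Cadd (Cmul (cseq T (S k)) (d (S m))) (Copp (Cmul (cseq T k) (d m))).
Proof.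
  intros Hr m.
  assert (forall k, d (m + S k)%nat = Cadd (Cmul (cseq T (S k)) (d (S m))) (Copp (Cmul (cseq T k) (d m)))
     /\ d (m + S (S k))%nat = Cadd (Cmul (cseq T (S (S k))) (d (S m))) (Copp (Cmul (cseq T (S k)) (d m)))).
  { induction k as [|k [IH1 IH2]].
    - split.
      + replace (m + 1)%nat with (S m) by lia. simpl. cring.
      + replace (m + 2)%nat with (S (S m)) by lia. rewrite Hr. simpl. cring.
    - split; [exact IH2|].
      replace (m + S (S (S k)))%nat with (S (S (m + S k))) by lia.
      rewrite Hr. replace (S (m + S k)) with (m + S (S k))%nat by lia.
      rewrite IH1, IH2. change (cseq T (S (S (S k)))) with
        (Cadd (Cmul T (cseq T (S (S k)))) (Copp (cseq T (S k)))). cring. }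
  intro k; apply H.
Qed.

Lemma zero_of z T : C0 = Cadd (Cmul T C0) (Copp z) -> z = C0.
Proof. intro H. apply Ceq; [apply (f_equal Re) in H|apply (f_equal Im) in H]; simpl in *; lra. Qed.

Lemma back T d : Rec T d -> forall m, d m = C0 -> d (S m) = C0 -> d 0%nat = C0 /\ d 1%nat = C0.
Proof.
  intros Hr m. induction m; intros H1 H2. auto.
  apply IHm; auto. pose proof (Hr m) as E. rewrite H1, H2 in E. eapply zero_of; eauto.
Qed.

Definition Good (Q : nat -> Prop) :=
  exists p b, (0 < p)%nat /\ forall j, (b < j * p)%nat -> Q (j * p)%nat.
Definition Event (Q : nat -> Prop) := exists N, forall n, (N <= n)%nat -> Q n.

Lemma C1_nz : C1 <> C0. Proof. intro E; apply (f_equal Re) in E; simpl in E; lra. Qed.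

Lemma seq_good T d : Rec T d -> d 0%nat <> C0 -> Good (fun m => d m <> C0).
Proof.
  intros Hr H0.
  destruct (classic (exists m1 m2, (m1 < m2)%nat /\ d m1 = C0 /\ d m2 = C0)) as
     [[m1 [m2 [Hlt [Z1 Z2]]]]|Hno].
  - destruct (Nat.lt_exists_pred 0 (m2 - m1)) as [k [Hk _]]; [lia|].
    assert (Em2 : m2 = (m1 + S k)%nat) by lia. subst m2.
    assert (Hd1 : d (S m1) <> C0).
    { intro E. apply H0. exact (proj1 (back T d Hr m1 Z1 E)). }
    pose proof (lin T d Hr m1 k) as L. rewrite Z1, Z2 in L.
    assert (Hc : cseq T (S k) = C0).
    { apply (Cmul_integral _ (d (S m1))); auto.
      apply Ceq; [apply (f_equal Re) in L|apply (f_equal Im) in L]; simpl in *; lra. }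
    set (kap := Copp (cseq T k)).
    assert (Hsh : forall m, d (m + S k)%nat = Cmul kap (d m)).
    { intro m. rewrite (lin T d Hr m k), Hc. unfold kap. cring. }
    assert (Hkap : kap <> C0).
    { intro E. assert (cseq T k = C0).
      { apply Ceq; [apply (f_equal Re) in E|apply (f_equal Im) in E]; unfold kap in E; simpl in *; lra. }
      destruct (back T _ (cseq_rec T) k H Hc) as [_ H1]. apply C1_nz; exact H1. }
    exists (S k), 0%nat. split; [lia|]. intros j _.
    assert (forall j, d (j * S k)%nat = Cmul (Cpow kap j) (d 0%nat)).
    { induction j0. simpl. cring.
      replace (S j0 * S k)%nat with (j0 * S k + S k)%nat by lia.
      rewrite Hsh, IHj0. simpl. cring. }
    rewrite H. apply Cmul_nz; auto. apply Cpow_nz; auto.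
  - destruct (classic (exists m1, d m1 = C0)) as [[m1 Z1]|Hn].
    + exists 1%nat, m1. split; [lia|]. intros j Hj E. rewrite Nat.mul_1_r in *.
      apply Hno. exists m1, j. auto.
    + exists 1%nat, 0%nat. split; [lia|]. intros j _ E. apply Hn; eauto.
Qed.

Lemma Good_mono (Q1 Q2 : nat -> Prop) : (forall m, Q1 m -> Q2 m) -> Good Q1 -> Good Q2.
Proof. intros H [p [b [Hp Hq]]]. exists p, b. split; auto. Qed.

Lemma Good_and Q1 Q2 : Good Q1 -> Good Q2 -> Good (fun m => Q1 m /\ Q2 m).
Proof.
  intros [p1 [b1 [Hp1 H1]]] [p2 [b2 [Hp2 H2]]].
  exists (p1 * p2)%nat, (Nat.max b1 b2). split; [nia|]. intros j Hj. split.
  - replace (j * (p1 * p2))%nat with ((j * p2) * p1)%nat by ring. apply H1.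
    replace ((j * p2) * p1)%nat with (j * (p1 * p2))%nat by ring. lia.
  - replace (j * (p1 * p2))%nat with ((j * p1) * p2)%nat by ring. apply H2.
    replace ((j * p1) * p2)%nat with (j * (p1 * p2))%nat by ring. lia.
Qed.

Lemma Good_all (q : nat) (Q : nat -> nat -> Prop) :
  (forall i, (i < q)%nat -> Good (Q i)) -> Good (fun m => forall i, (i < q)%nat -> Q i m).
Proof.
  induction q; intros H.
  - exists 1%nat, 0%nat. split; [lia|]. intros; lia.
  - eapply Good_mono; [|apply (Good_and _ _ (IHq (fun i Hi => H i ltac:(lia))) (H q ltac:(lia)))].
    simpl. intros m [Ha Hb] i Hi. destruct (Nat.eq_dec i q); [subst; auto|apply Ha; lia].
Qed.

Lemma Event_and Q1 Q2 : Event Q1 -> Event Q2 -> Event (fun n => Q1 n /\ Q2 n).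
Proof. intros [N1 H1] [N2 H2]. exists (Nat.max N1 N2). intros n Hn; split; [apply H1|apply H2]; lia. Qed.

Lemma Event_all (q : nat) (Q : nat -> nat -> Prop) :
  (forall i, (i < q)%nat -> Event (Q i)) -> Event (fun n => forall i, (i < q)%nat -> Q i n).
Proof.
  induction q; intros H.
  - exists 0%nat. intros; lia.
  - destruct (Event_and _ _ (IHq (fun i Hi => H i ltac:(lia))) (H q ltac:(lia))) as [N HN].
    exists N. intros n Hn i Hi. destruct (HN n Hn) as [Ha Hb].
    destruct (Nat.eq_dec i q); [subst; auto|apply Ha; lia].
Qed.

Lemma comp A B : Mdet A = C1 -> Mdet B = C1 -> loxodromic2 B ->
  Good (fun m => Event (fun n => loxodromic2 (Mmul (Mpow A m) (Mpow B n)))).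
Proof.
  intros HA HB Hl.
  destruct (eig (Mtr B) Hl) as [l [u [Hs [Hp Hn]]]].
  set (d := fun m => Cadd (Mtr (Mmul (Mpow A m) (Mmul B Mid))) (Copp (Cmul u (Mtr (Mmul (Mpow A m) Mid))))).
  assert (Hr : Rec (Mtr A) d).
  { intro m. unfold d. change (Mpow A (S (S m))) with (Mmul A (Mmul A (Mpow A m))).
    change (Mpow A (S m)) with (Mmul A (Mpow A m)).
    rewrite !R1, HA. cring. }
  assert (H0 : d 0%nat <> C0).
  { assert (E : d 0%nat = Cadd l (Copp u)).
    { unfold d. simpl Mpow. transitivity (Cadd (Mtr B) (Copp (Cmul u (mkC 2 0)))).
      - destruct B as [[] [] [] []]. cring.
      - rewrite <- Hs. cring. }
    rewrite E. intro Z. assert (l = u).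
    { apply Ceq; [apply (f_equal Re) in Z|apply (f_equal Im) in Z]; simpl in Z; lra. }
    subst u. assert (Cn2 (Cmul l l) = 1) by (rewrite Hp; unfold Cn2; simpl; ring).
    rewrite Cn2_mul in H. nra. }
  eapply Good_mono; [|apply (seq_good _ d Hr H0)].
  intros m Hm. apply (growth _ B l u); auto.
Qed.

Lemma lox_comm X Y : loxodromic2 (Mmul X Y) -> loxodromic2 (Mmul Y X).
Proof. unfold loxodromic2. rewrite Mtr_comm. auto. Qed.

Theorem lemmaL (q r : nat) (g h : Gelt) :
  inG q r g -> inG q r h ->
  elliptic q r g -> infinite_order q r g ->
  loxodromic q r h ->
  exists m n : nat, (0 < m)%nat /\ (0 < n)%nat /\
    loxodromic q r (Gmul (Gpow g m) (Gpow h n)) /\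
    loxodromic q r (Gmul (Gpow h n) (Gpow g m)).
Proof.
  intros [Hg1 Hg2] [Hh1 Hh2] _ _ [Hl1 Hl2].
  assert (G1 : Good (fun m => forall i, (i < q)%nat ->
     Event (fun n => loxodromic2 (Mmul (Mpow (fst g i) m) (Mpow (fst h i) n))))).
  { apply (Good_all q (fun i m => Event (fun n => loxodromic2 (Mmul (Mpow (fst g i) m) (Mpow (fst h i) n))))).
    intros i Hi. apply comp; [apply Hg1|apply Hh1|apply Hl1]; auto. }
  assert (G2 : Good (fun m => forall i, (i < r)%nat ->
     Event (fun n => loxodromic2 (Mmul (Mpow (snd g i) m) (Mpow (snd h i) n))))).
  { apply (Good_all r (fun i m => Event (fun n => loxodromic2 (Mmul (Mpow (snd g i) m) (Mpow (snd h i) n))))).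
    intros i Hi. apply comp; [apply (proj1 (Hg2 i Hi))|apply (proj1 (Hh2 i Hi))|apply Hl2; auto]. }
  destruct (Good_and _ _ G1 G2) as [p [b [Hp Hgood]]].
  destruct (Hgood (S b)) as [E1 E2]; [nia|].
  destruct (Event_and _ _ (Event_all q _ E1) (Event_all r _ E2)) as [N HN].
  destruct (HN (S N)) as [F1 F2]; [lia|].
  exists (S b * p)%nat, (S N). split; [nia|]. split; [lia|].
  split; split; intros i Hi; simpl.
  - apply F1; auto.
  - apply F2; auto.
  - apply lox_comm, F1; auto.
  - apply lox_comm, F2; auto.
Qed.
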